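(* Let $\mathcal{P}$ be a collection of cells with maximal rectangles $\mathcal{B}_1,\dots,\mathcal{B}_p$ and switching rook polynomial $\sum_{j=0}^d\tilde r_j(\mathcal{P})t^j$, $d=r(\mathcal{P})$. Suppose $\tilde r_d(\mathcal{P})=1$, and let $\mathcal{T}$ be the unique canonical $r(\mathcal{P})$-rook configuration in $\mathcal{P}$ with respect to $\mathcal{B}_1,\dots,\mathcal{B}_p$. Then: (1) every column of $\mathcal{P}$ contains a cell occupied by a rook of $\mathcal{T}$, and every row of $\mathcal{P}$ contains a cell occupied by a rook of $\mathcal{T}$; (2) if $R$ is a rook placed in a cell of $\mathcal{P}$ not occupied by any rook of $\mathcal{T}$, then there exist exactly two rooks of $\mathcal{T}$ that are in attacking position with $R$.
   Context: A cell is $[a,a+(1,1)]\subset\mathbb{R}^2$ with $a\in\mathbb{Z}^2$ its lower left corner; a collection of cells is a non-empty finite set of cells. For lower left corners $a\le b$, the rectangle $[A,B]$ is the set of cells whose lower left corner $c$ satisfies $a\le c\le b$. A row (resp. column) of $\mathcal{P}$ is an inclusion-maximal rectangle of cells of $\mathcal{P}$ all having the same second (resp. first) lower-left coordinate. A maximal rectangle of $\mathcal{P}$ is a rectangle of cells of $\mathcal{P}$ not properly contained in another such. Two rooks on distinct cells attack each other if some row or column of $\mathcal{P}$ contains both cells; a $k$-rook configuration is a set of $k$ pairwise non-attacking rooks on distinct cells of $\mathcal{P}$; $r(\mathcal{P})$ is the max $k$. A switch moves two rooks of a configuration occupying the lower-left and upper-right (resp. upper-left and lower-right) corner cells of a rectangle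 all of whose cells lie in $\mathcal{P}$ to the other two corner cells; $\tilde r_k(\mathcal{P})$ is the number of classes of $k$-rook configurations modulo sequences of switches. Canonical configuration with respect to the ordering $\mathcal{B}_1,\dots,\mathcal{B}_p$: starting from a configuration, for $i=1,\dots,p$ in turn, the rooks currently lying in $\mathcal{B}_i$, occupying cells with first coordinates $x_1<\dots<x_r$ and second coordinates $y_1<\dots<y_r$, are replaced by rooks on the cells with lower left corners $(x_1,y_1),\dots,(x_r,y_r)$; the result is the canonical configuration of the starting one, and it is equivalent to it up to switches. *)

(* Defs.v *)
From HB Require Import structures.
From mathcomp Require Import all_boot all_order all_algebra.
From mathcomp Require Import finmap.
From mathcomp Require Import boolp.
From Stdlib Require Import Relations.
Import Order.TTheory GRing.Theory Num.Theory.

Set Implicit Arguments.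
Unset Strict Implicit.
Unset Printing Implicit Defensive.

Local Open Scope fset_scope.

(* A cell is identified with its lower left corner a in Z^2. *)
Definition cell : Type := (int * int)%type.

Definition in_rect (a b c : cell) : bool :=
  [&& (a.1 <= c.1)%R, (c.1 <= b.1)%R, (a.2 <= c.2)%R & (c.2 <= b.2)%R].

Definition rect_in (P : {fset cell}) (a b : cell) : Prop :=
  [/\ (a.1 <= b.1)%R, (a.2 <= b.2)%R & forall c, in_rect a b c -> c \in P].

Definition rect_sub (a b a' b' : cell) : Prop :=
  forall c, in_rect a b c -> in_rect a' b' c.

Definition is_row (P : {fset cell}) (a b : cell) : Prop :=
  [/\ rect_in P a b, a.2 = b.2 &
      forall a' b', rect_in P a' b' -> a'.2 = b'.2 ->
        rect_sub a b a' b' -> rect_sub a' b' a b].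

Definition is_col (P : {fset cell}) (a b : cell) : Prop :=
  [/\ rect_in P a b, a.1 = b.1 &
      forall a' b', rect_in P a' b' -> a'.1 = b'.1 ->
        rect_sub a b a' b' -> rect_sub a' b' a b].

Definition is_maxrect (P : {fset cell}) (a b : cell) : Prop :=
  rect_in P a b /\
  forall a' b', rect_in P a' b' -> rect_sub a b a' b' -> rect_sub a' b' a b.

Definition attacks (P : {fset cell}) (c d : cell) : Prop :=
  c <> d /\ exists a b, (is_row P a b \/ is_col P a b) /\
                        in_rect a b c /\ in_rect a b d.

Definition is_config (P : {fset cell}) (C : {fset cell}) : Prop :=
  C `<=` P /\ forall c d, c \in C -> d \in C -> ~ attacks P c d.

Definition is_rook_number (P : {fset cell}) (d : nat) : Prop :=
  (exists C, is_config P C /\ #|` C| = d) /\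
  (forall C, is_config P C -> (#|` C| <= d)%N).

Definition switch (P : {fset cell}) (C D : {fset cell}) : Prop :=
  exists a b : cell, a <> b /\ rect_in P a b /\
    let ul : cell := (a.1, b.2) in let lr : cell := (b.1, a.2) in
    ((a \in C /\ b \in C /\ D = (C `\ a `\ b) `|` [fset ul; lr]) \/
     (ul \in C /\ lr \in C /\ ul <> lr /\ D = (C `\ ul `\ lr) `|` [fset a; b])).

Definition sw_equiv (P : {fset cell}) : {fset cell} -> {fset cell} -> Prop :=
  clos_refl_trans _ (switch P).

Definition configs (P : {fset cell}) (k : nat) : {fset {fset cell}} :=
  [fset C in fpowerset P | `[< is_config P C >] && (#|` C| == k)].

Definition sw_class (P : {fset cell}) (k : nat) (C : {fset cell}) :
  {fset {fset cell}} :=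
  [fset D in configs P k | `[< sw_equiv P C D >]].

Definition rtilde (P : {fset cell}) (k : nat) : nat :=
  #|` [fset sw_class P k C | C in configs P k]|.

Definition canon_step (B : cell * cell) (C : {fset cell}) : {fset cell} :=
  let S := [fset c in C | in_rect B.1 B.2 c] in
  let xs := sort (fun x y : int => (x <= y)%R) (undup [seq c.1 | c <- enum_fset S]) in
  let ys := sort (fun x y : int => (x <= y)%R) (undup [seq c.2 | c <- enum_fset S]) in
  (C `\` S) `|` seq_fset tt (zip xs ys).

Definition canonical_config (Bs : seq (cell * cell)) (C : {fset cell}) : {fset cell} :=
  foldl (fun C' B => canon_step B C') C Bs.

(* Main.v *)
Require Import Defs.
From HB Require Import structures.
From mathcomp Require Import all_boot all_order all_algebra.
From mathcomp Require Import finmap.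
From mathcomp Require Import boolp.
From mathcomp Require Import zify.
From Stdlib Require Import Relations.
Local Open Scope fset_scope.
Import Order.TTheory GRing.Theory Num.Theory.
Set Implicit Arguments.
Unset Strict Implicit.
Unset Printing Implicit Defensive.
Section H1.
Local Open Scope ring_scope.
Lemma inrP (a b c : cell) : reflect [/\ a.1 <= c.1, c.1 <= b.1, a.2 <= c.2 & c.2 <= b.2] (in_rect a b c).
Proof. exact: and4P. Qed.

Lemma col_absorb (P : {fset cell}) a b a' b' c :
  is_col P a b -> rect_in P a' b' -> a'.1 = b'.1 -> in_rect a b c -> in_rect a' b' c ->
  rect_sub a' b' a b.
Proof.
case=> [[h1 h2 hP] hx hmax] [h1' h2' hP'] hx' /inrP[c1 c2 c3 c4] /inrP[d1 d2 d3 d4].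
have [lo [[l1 l2] l3]] : exists lo : int, (lo <= a.2 /\ lo <= a'.2) /\ (lo = a.2 \/ lo = a'.2).
  by case: (lerP a.2 a'.2) => h; [exists a.2 | exists a'.2]; split; try lia.
have [hi [[u1 u2] u3]] : exists hi : int, (b.2 <= hi /\ b'.2 <= hi) /\ (hi = b.2 \/ hi = b'.2).
  by case: (lerP b.2 b'.2) => h; [exists b'.2 | exists b.2]; split; try lia.
have R : rect_in P (a.1, lo) (a.1, hi).
  split => //=; first lia.
  move=> w /inrP[/= w1 w2 w3 w4].
  case: (lerP a.2 w.2) => wa.
    case: (lerP w.2 b.2) => wb.
      by apply: hP; apply/inrP; split; lia.
    by apply: hP'; apply/inrP; split; lia.
  by apply: hP'; apply/inrP; split; lia.
have S : rect_sub a b (a.1, lo) (a.1, hi).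
  by move=> w /inrP[w1 w2 w3 w4]; apply/inrP => /=; split; lia.
have := hmax _ _ R erefl S => S'.
move=> w /inrP[w1 w2 w3 w4]; apply: S'; apply/inrP => /=; split; lia.
Qed.

Lemma row_absorb (P : {fset cell}) a b a' b' c :
  is_row P a b -> rect_in P a' b' -> a'.2 = b'.2 -> in_rect a b c -> in_rect a' b' c ->
  rect_sub a' b' a b.
Proof.
case=> [[h1 h2 hP] hx hmax] [h1' h2' hP'] hx' /inrP[c1 c2 c3 c4] /inrP[d1 d2 d3 d4].
have [lo [[l1 l2] l3]] : exists lo : int, (lo <= a.1 /\ lo <= a'.1) /\ (lo = a.1 \/ lo = a'.1).
  by case: (lerP a.1 a'.1) => h; [exists a.1 | exists a'.1]; split; try lia.
have [hi [[u1 u2] u3]] : exists hi : int, (b.1 <= hi /\ b'.1 <= hi) /\ (hi = b.1 \/ hi = b'.1).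
  by case: (lerP b.1 b'.1) => h; [exists b'.1 | exists b.1]; split; try lia.
have R : rect_in P (lo, a.2) (hi, a.2).
  split => //=; first lia.
  move=> w /inrP[/= w1 w2 w3 w4].
  case: (lerP a.1 w.1) => wa.
    case: (lerP w.1 b.1) => wb.
      by apply: hP; apply/inrP; split; lia.
    by apply: hP'; apply/inrP; split; lia.
  by apply: hP'; apply/inrP; split; lia.
have S : rect_sub a b (lo, a.2) (hi, a.2).
  by move=> w /inrP[w1 w2 w3 w4]; apply/inrP => /=; split; lia.
have := hmax _ _ R erefl S => S'.
move=> w /inrP[w1 w2 w3 w4]; apply: S'; apply/inrP => /=; split; lia.
Qed.

Lemma col_seg (P : {fset cell}) k1 k2 a b u v :
  is_col P k1 k2 -> rect_in P a b -> in_rect a b u -> in_rect a b v -> u.1 = v.1 ->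
  in_rect k1 k2 u -> in_rect k1 k2 v.
Proof.
move=> hK [_ _ hP] /inrP[u1 u2 u3 u4] /inrP[v1 v2 v3 v4] e hu.
case: (lerP u.2 v.2) => h.
  have R : rect_in P u v.
    split; try lia; move=> w /inrP[w1 w2 w3 w4]; apply: hP; apply/inrP; split; lia.
  have H := col_absorb hK R e hu; apply: H; apply/inrP; split; lia.
have R : rect_in P v u.
  split; try lia; move=> w /inrP[w1 w2 w3 w4]; apply: hP; apply/inrP; split; lia.
have H := col_absorb hK R (esym e) hu; apply: H; apply/inrP; split; lia.
Qed.

Lemma row_seg (P : {fset cell}) k1 k2 a b u v :
  is_row P k1 k2 -> rect_in P a b -> in_rect a b u -> in_rect a b v -> u.2 = v.2 ->
  in_rect k1 k2 u -> in_rect k1 k2 v.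
Proof.
move=> hK [_ _ hP] /inrP[u1 u2 u3 u4] /inrP[v1 v2 v3 v4] e hu.
case: (lerP u.1 v.1) => h.
  have R : rect_in P u v.
    split; try lia; move=> w /inrP[w1 w2 w3 w4]; apply: hP; apply/inrP; split; lia.
  have H := row_absorb hK R e hu; apply: H; apply/inrP; split; lia.
have R : rect_in P v u.
  split; try lia; move=> w /inrP[w1 w2 w3 w4]; apply: hP; apply/inrP; split; lia.
have H := row_absorb hK R (esym e) hu; apply: H; apply/inrP; split; lia.
Qed.

Lemma col_share (P : {fset cell}) a b a' b' c t :
  is_col P a b -> is_col P a' b' -> in_rect a b c -> in_rect a' b' c ->
  in_rect a' b' t -> in_rect a b t.
Proof. move=> h [h1 h2 _] hc hc' ht; have H := col_absorb h h1 h2 hc hc'; exact: (H t ht). Qed.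

Lemma row_share (P : {fset cell}) a b a' b' c t :
  is_row P a b -> is_row P a' b' -> in_rect a b c -> in_rect a' b' c ->
  in_rect a' b' t -> in_rect a b t.
Proof. move=> h [h1 h2 _] hc hc' ht; have H := row_absorb h h1 h2 hc hc'; exact: (H t ht). Qed.

Lemma attacks_sym P c d : attacks P c d -> attacks P d c.
Proof. by case=> ne [a [b [h [h1 h2]]]]; split; [by apply/nesym | exists a, b]. Qed.

Lemma attacks_xy P c d : attacks P c d -> c.1 = d.1 \/ c.2 = d.2.
Proof.
case=> _ [a [b [[[_ e _]|[_ e _]] [/inrP[c1 c2 c3 c4] /inrP[d1 d2 d3 d4]]]]].
  by right; lia.
by left; lia.
Qed.

Lemma in_rect_refl (P : {fset cell}) a b : rect_in P a b -> in_rect a b a /\ in_rect a b b.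
Proof. by case=> h1 h2 _; split; apply/inrP; split; lia. Qed.

End H1.
Section H2.
Local Open Scope ring_scope.

Lemma bound_y (P : {fset cell}) : exists M : nat, forall p, p \in P -> (absz p.2 <= M)%N.
Proof.
exists (\max_(p <- enum_fset P) absz p.2)%N => p hp.
by apply: (@leq_bigmax_seq _ (enum_fset P) xpredT (fun p : cell => absz p.2)).
Qed.

Lemma bound_x (P : {fset cell}) : exists M : nat, forall p, p \in P -> (absz p.1 <= M)%N.
Proof.
exists (\max_(p <- enum_fset P) absz p.1)%N => p hp.
by apply: (@leq_bigmax_seq _ (enum_fset P) xpredT (fun p : cell => absz p.1)).
Qed.

Lemma col_exists (P : {fset cell}) c : c \in P -> exists a b, is_col P a b /\ in_rect a b c.
Proof.
case: c => cx cy hc.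
have [M hM] := bound_y P.
have exd : exists n, (fun n : nat => (cx, cy - n%:Z) \notin P) n.
  by exists (M + absz cy).+1; apply/negP => /hM /=; lia.
have exu : exists n, (fun n : nat => (cx, cy + n%:Z) \notin P) n.
  by exists (M + absz cy).+1; apply/negP => /hM /=; lia.
case: (ex_minnP exd) => n0 hn0 hmin0.
case: (ex_minnP exu) => m0 hm0 hmin1.
have ind k : (k < n0)%N -> (cx, cy - k%:Z) \in P.
  by move=> hk; apply/negPn/negP => /hmin0; lia.
have inu k : (k < m0)%N -> (cx, cy + k%:Z) \in P.
  by move=> hk; apply/negPn/negP => /hmin1; lia.
have n0pos : (0 < n0)%N.
  move: hn0; case: (n0) => //; have -> : cy - (Posz 0) = cy by lia.
  by rewrite hc.
have m0pos : (0 < m0)%N.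
  move: hm0; case: (m0) => //; have -> : cy + (Posz 0) = cy by lia.
  by rewrite hc.
exists (cx, cy - (n0.-1)%:Z), (cx, cy + (m0.-1)%:Z); split; last first.
  apply/inrP => /=; split; lia.
have R : rect_in P (cx, cy - (n0.-1)%:Z) (cx, cy + (m0.-1)%:Z).
  split => /=; [lia | lia |].
  case=> wx wy /inrP /= [w1 w2 w3 w4].
  case: (lerP wy cy) => h.
    have -> : (wx, wy) = (cx, cy - (absz (cy - wy))%:Z) by congr (_, _); lia.
    apply: ind; lia.
  have -> : (wx, wy) = (cx, cy + (absz (wy - cy))%:Z) by congr (_, _); lia.
  apply: inu; lia.
split=> //.
have [ha hb] := in_rect_refl R.
move=> a' b' [h1 h2 hP'] e' hsub.
move: (hsub _ ha) (hsub _ hb) => /inrP /= [a1 a2 a3 a4] /inrP /= [b1 b2 b3 b4].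
case=> wx wy /inrP /= [w1 w2 w3 w4].
apply/inrP => /=.
case: (lerP (cy - (n0.-1)%:Z) wy) => h; last first.
  have : (cx, cy - n0%:Z) \in P by apply: hP'; apply/inrP => /=; split; lia.
  by rewrite (negbTE hn0).
case: (lerP wy (cy + (m0.-1)%:Z)) => h'; first by split; lia.
have : (cx, cy + m0%:Z) \in P by apply: hP'; apply/inrP => /=; split; lia.
by rewrite (negbTE hm0).
Qed.

Lemma row_exists (P : {fset cell}) c : c \in P -> exists a b, is_row P a b /\ in_rect a b c.
Proof.
case: c => cx cy hc.
have [M hM] := bound_x P.
have exd : exists n, (fun n : nat => (cx - n%:Z, cy) \notin P) n.
  by exists (M + absz cx).+1; apply/negP => /hM /=; lia.
have exu : exists n, (fun n : nat => (cx + n%:Z, cy) \notin P) n.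
  by exists (M + absz cx).+1; apply/negP => /hM /=; lia.
case: (ex_minnP exd) => n0 hn0 hmin0.
case: (ex_minnP exu) => m0 hm0 hmin1.
have ind k : (k < n0)%N -> (cx - k%:Z, cy) \in P.
  by move=> hk; apply/negPn/negP => /hmin0; lia.
have inu k : (k < m0)%N -> (cx + k%:Z, cy) \in P.
  by move=> hk; apply/negPn/negP => /hmin1; lia.
have n0pos : (0 < n0)%N.
  move: hn0; case: (n0) => //; have -> : cx - (Posz 0) = cx by lia.
  by rewrite hc.
have m0pos : (0 < m0)%N.
  move: hm0; case: (m0) => //; have -> : cx + (Posz 0) = cx by lia.
  by rewrite hc.
exists (cx - (n0.-1)%:Z, cy), (cx + (m0.-1)%:Z, cy); split; last first.
  apply/inrP => /=; split; lia.
have R : rect_in P (cx - (n0.-1)%:Z, cy) (cx + (m0.-1)%:Z, cy).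
  split => /=; [lia | lia |].
  case=> wx wy /inrP /= [w1 w2 w3 w4].
  case: (lerP wx cx) => h.
    have -> : (wx, wy) = (cx - (absz (cx - wx))%:Z, cy) by congr (_, _); lia.
    apply: ind; lia.
  have -> : (wx, wy) = (cx + (absz (wx - cx))%:Z, cy) by congr (_, _); lia.
  apply: inu; lia.
split=> //.
have [ha hb] := in_rect_refl R.
move=> a' b' [h1 h2 hP'] e' hsub.
move: (hsub _ ha) (hsub _ hb) => /inrP /= [a1 a2 a3 a4] /inrP /= [b1 b2 b3 b4].
case=> wx wy /inrP /= [w1 w2 w3 w4].
apply/inrP => /=.
case: (lerP (cx - (n0.-1)%:Z) wx) => h; last first.
  have : (cx - n0%:Z, cy) \in P by apply: hP'; apply/inrP => /=; split; lia.
  by rewrite (negbTE hn0).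
case: (lerP wx (cx + (m0.-1)%:Z)) => h'; first by split; lia.
have : (cx + m0%:Z, cy) \in P by apply: hP'; apply/inrP => /=; split; lia.
by rewrite (negbTE hm0).
Qed.
End H2.
Definition nohit (a b : cell) (X : {fset cell}) := forall z, z \in X -> ~~ in_rect a b z.

Lemma switch_mem (X : {fset cell}) a b u v z :
  z \in (X `\ a `\ b) `|` [fset u; v] -> z \in X \/ z = u \/ z = v.
Proof.
rewrite !inE => /orP[/andP[_ /andP[_ h]]|/orP[/eqP->|/eqP->]]; by [left | right; left | right; right].
Qed.

Lemma switch_nohit_col (P : {fset cell}) k1 k2 X D :
  is_col P k1 k2 -> switch P X D -> nohit k1 k2 X -> nohit k1 k2 D.
Proof.
move=> hK [a [b [_ [R hsw]]]] hX z.
have [ha hb] := in_rect_refl R.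
have [h1 h2 _] := R.
have hul : in_rect a b (a.1, b.2) by apply/and4P; split => //=; lia.
have hlr : in_rect a b (b.1, a.2) by apply/and4P; split => //=; lia.
case: hsw => [[aX [bX ->]]|[ulX [lrX [_ ->]]]] /switch_mem [zX|[->|->]]; try exact: hX.
- by apply/negP => /(col_seg hK R hul ha erefl); apply/negP/hX.
- by apply/negP => /(col_seg hK R hlr hb erefl); apply/negP/hX.
- by apply/negP => /(col_seg hK R ha hul erefl); apply/negP/hX.
- by apply/negP => /(col_seg hK R hb hlr erefl); apply/negP/hX.
Qed.

Lemma switch_nohit_row (P : {fset cell}) k1 k2 X D :
  is_row P k1 k2 -> switch P X D -> nohit k1 k2 X -> nohit k1 k2 D.
Proof.
move=> hK [a [b [_ [R hsw]]]] hX z.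
have [ha hb] := in_rect_refl R.
have [h1 h2 _] := R.
have hul : in_rect a b (a.1, b.2) by apply/and4P; split => //=; lia.
have hlr : in_rect a b (b.1, a.2) by apply/and4P; split => //=; lia.
case: hsw => [[aX [bX ->]]|[ulX [lrX [_ ->]]]] /switch_mem [zX|[->|->]]; try exact: hX.
- by apply/negP => /(row_seg hK R hul hb erefl); apply/negP/hX.
- by apply/negP => /(row_seg hK R hlr ha erefl); apply/negP/hX.
- by apply/negP => /(row_seg hK R ha hlr erefl); apply/negP/hX.
- by apply/negP => /(row_seg hK R hb hul erefl); apply/negP/hX.
Qed.

Lemma sw_nohit_col (P : {fset cell}) k1 k2 X D :
  is_col P k1 k2 -> sw_equiv P X D -> nohit k1 k2 X -> nohit k1 k2 D.
Proof.
move=> hK; elim=> [x y hs|x|x y w _ IH1 _ IH2]; [exact: switch_nohit_col hK hs|by []|].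
by move=> /IH1 /IH2.
Qed.

Lemma sw_nohit_row (P : {fset cell}) k1 k2 X D :
  is_row P k1 k2 -> sw_equiv P X D -> nohit k1 k2 X -> nohit k1 k2 D.
Proof.
move=> hK; elim=> [x y hs|x|x y w _ IH1 _ IH2]; [exact: switch_nohit_row hK hs|by []|].
by move=> /IH1 /IH2.
Qed.

Lemma in_configs (P : {fset cell}) k X :
  X \in configs P k <-> is_config P X /\ #|` X| = k.
Proof.
rewrite /configs !inE fpowersetE /=; split.
  by case/andP=> _ /andP[/asboolP h /eqP e].
case=> h e; apply/andP; split; first by case: h.
by apply/andP; split; [exact/asboolP | exact/eqP].
Qed.

Lemma rtilde1_equiv (P : {fset cell}) k X Y :
  rtilde P k = 1%N -> X \in configs P k -> Y \in configs P k -> sw_equiv P X Y.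
Proof.
move=> r1 hX hY.
have iX : sw_class P k X \in [fset sw_class P k C | C in configs P k] by apply: in_imfset.
have iY : sw_class P k Y \in [fset sw_class P k C | C in configs P k] by apply: in_imfset.
move: r1; rewrite /rtilde => /eqP/cardfs1P[S eS].
move: iX iY; rewrite eS !inE => /eqP eX /eqP eY.
have : Y \in sw_class P k Y.
  rewrite /sw_class inE /=; apply/andP; split; [exact: hY | apply/asboolP; exact: rt_refl].
rewrite eY -eX /sw_class inE /= => /andP[_ /asboolP]; done.
Qed.
Definition hitscol (P X : {fset cell}) :=
  forall a b, is_col P a b -> exists t, t \in X /\ in_rect a b t.
Definition hitsrow (P X : {fset cell}) :=
  forall a b, is_row P a b -> exists t, t \in X /\ in_rect a b t.

Lemma card_swap (C : {fset cell}) t a :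
  t \in C -> a \notin C -> #|` a |` (C `\ t)| = #|` C|.
Proof.
move=> tC aC; rewrite cardfsU1 (cardfsD1 t C) tC.
have -> : a \notin C `\ t by rewrite !inE (negbTE aC) andbF.
by [].
Qed.

Lemma config_hits_col (P : {fset cell}) d C :
  is_rook_number P d -> rtilde P d = 1%N -> is_config P C -> #|` C| = d -> hitscol P C.
Proof.
move=> [_ hmax] rt1 hC hd a b hK.
case: (pselect (exists t, t \in C /\ in_rect a b t)) => // nh; exfalso.
have [hab _ _] := hK.
have [xa _] := in_rect_refl hab.
have xP : a \in P by case: hab => _ _; apply.
have xC : a \notin C by apply/negP => h; apply: nh; exists a.
have nhC : nohit a b C by move=> z zC; apply/negP => h; apply: nh; exists z.
case: (pselect (exists t, t \in C /\ exists r1 r2, is_row P r1 r2 /\ in_rect r1 r2 a /\ in_rect r1 r2 t))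
   => [[t [tC [r1 [r2 [hR [ra rt]]]]]]|nr].
  have key e : e != t -> e \in C -> ~ attacks P a e.
    move=> et eC [ne [r1' [r2' [[hR'|hK'] [h1 h2]]]]].
      have he := row_share hR hR' ra h1 h2.
      apply: (hC.2 t e tC eC); split; first by move=> te; move: et; rewrite te eqxx.
      by exists r1, r2; split; [left|].
    have he := col_share hK hK' xa h1 h2.
    by apply: nh; exists e.
  have conf : is_config P (a |` (C `\ t)).
    split.
      apply/fsubsetP => z; rewrite !inE => /orP[/eqP->|/andP[_ zC]]; first exact: xP.
      exact: (fsubsetP hC.1).
    move=> c e; rewrite !inE => /orP[/eqP->|/andP[ct cC]] /orP[/eqP->|/andP[et eC]].
    - by case.
    - exact: key.
    - by move=> /attacks_sym; apply: key.
    - exact: hC.2.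
  have sz : #|` a |` (C `\ t)| = d by rewrite card_swap.
  have eq : sw_equiv P C (a |` (C `\ t)).
    by apply: (rtilde1_equiv rt1); apply/in_configs.
  have := sw_nohit_col hK eq nhC (fset1U1 _ _).
  by rewrite xa.
have key e : e \in C -> ~ attacks P a e.
  move=> eC [ne [r1' [r2' [[hR'|hK'] [h1 h2]]]]].
    by apply: nr; exists e; split=> //; exists r1', r2'.
  have he := col_share hK hK' xa h1 h2.
  by apply: nh; exists e.
have conf : is_config P (a |` C).
  split.
    apply/fsubsetP => z; rewrite !inE => /orP[/eqP->|zC]; first exact: xP.
    exact: (fsubsetP hC.1).
  move=> c e; rewrite !inE => /orP[/eqP->|cC] /orP[/eqP->|eC].
  - by case.
  - exact: key.
  - by move=> /attacks_sym; apply: key.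
  - exact: hC.2.
have := hmax _ conf; rewrite cardfsU1 xC hd.
by rewrite add1n ltnn.
Qed.

Lemma config_hits_row (P : {fset cell}) d C :
  is_rook_number P d -> rtilde P d = 1%N -> is_config P C -> #|` C| = d -> hitsrow P C.
Proof.
move=> [_ hmax] rt1 hC hd a b hK.
case: (pselect (exists t, t \in C /\ in_rect a b t)) => // nh; exfalso.
have [hab _ _] := hK.
have [xa _] := in_rect_refl hab.
have xP : a \in P by case: hab => _ _; apply.
have xC : a \notin C by apply/negP => h; apply: nh; exists a.
have nhC : nohit a b C by move=> z zC; apply/negP => h; apply: nh; exists z.
case: (pselect (exists t, t \in C /\ exists r1 r2, is_col P r1 r2 /\ in_rect r1 r2 a /\ in_rect r1 r2 t))
   => [[t [tC [r1 [r2 [hR [ra rt]]]]]]|nr].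
  have key e : e != t -> e \in C -> ~ attacks P a e.
    move=> et eC [ne [r1' [r2' [[hK'|hR'] [h1 h2]]]]]; last first.
      have he := col_share hR hR' ra h1 h2.
      apply: (hC.2 t e tC eC); split; first by move=> te; move: et; rewrite te eqxx.
      by exists r1, r2; split; [right|].
    have he := row_share hK hK' xa h1 h2.
    by apply: nh; exists e.
  have conf : is_config P (a |` (C `\ t)).
    split.
      apply/fsubsetP => z; rewrite !inE => /orP[/eqP->|/andP[_ zC]]; first exact: xP.
      exact: (fsubsetP hC.1).
    move=> c e; rewrite !inE => /orP[/eqP->|/andP[ct cC]] /orP[/eqP->|/andP[et eC]].
    - by case.
    - exact: key.
    - by move=> /attacks_sym; apply: key.
    - exact: hC.2.
  have sz : #|` a |` (C `\ t)| = d by rewrite card_swap.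
  have eq : sw_equiv P C (a |` (C `\ t)).
    by apply: (rtilde1_equiv rt1); apply/in_configs.
  have := sw_nohit_row hK eq nhC (fset1U1 _ _).
  by rewrite xa.
have key e : e \in C -> ~ attacks P a e.
  move=> eC [ne [r1' [r2' [[hK'|hR'] [h1 h2]]]]]; last first.
    by apply: nr; exists e; split=> //; exists r1', r2'.
  have he := row_share hK hK' xa h1 h2.
  by apply: nh; exists e.
have conf : is_config P (a |` C).
  split.
    apply/fsubsetP => z; rewrite !inE => /orP[/eqP->|zC]; first exact: xP.
    exact: (fsubsetP hC.1).
  move=> c e; rewrite !inE => /orP[/eqP->|cC] /orP[/eqP->|eC].
  - by case.
  - exact: key.
  - by move=> /attacks_sym; apply: key.
  - exact: hC.2.
have := hmax _ conf; rewrite cardfsU1 xC hd.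
by rewrite add1n ltnn.
Qed.
Section Z.
Variables (T1 T2 : eqType) (x0 : T1) (y0 : T2).

Lemma zip_memP (xs : seq T1) (ys : seq T2) z :
  size xs = size ys -> z \in zip xs ys ->
  exists2 i, (i < size xs)%N & z = (nth x0 xs i, nth y0 ys i).
Proof.
move=> e /(nthP (x0, y0)) [i]; rewrite size_zip e minnn nth_zip // => hi <-.
by exists i; rewrite ?e.
Qed.

Lemma zip_nth_mem (xs : seq T1) (ys : seq T2) i :
  size xs = size ys -> (i < size xs)%N -> (nth x0 xs i, nth y0 ys i) \in zip xs ys.
Proof.
move=> e hi; rewrite -nth_zip //; apply: mem_nth; by rewrite size_zip e minnn -e.
Qed.

Lemma zip_memx (xs : seq T1) (ys : seq T2) x :
  size xs = size ys -> x \in xs -> exists y, (x, y) \in zip xs ys /\ y \in ys.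
Proof.
move=> e hx; exists (nth y0 ys (index x xs)).
have hi : (index x xs < size xs)%N by rewrite index_mem.
split; last by apply: mem_nth; rewrite -e.
by rewrite -{1}(nth_index x0 hx); apply: zip_nth_mem.
Qed.

Lemma zip_memy (xs : seq T1) (ys : seq T2) y :
  size xs = size ys -> y \in ys -> exists x, (x, y) \in zip xs ys /\ x \in xs.
Proof.
move=> e hy; exists (nth x0 xs (index y ys)).
have hi : (index y ys < size ys)%N by rewrite index_mem.
split; last by apply: mem_nth; rewrite e.
by rewrite -{2}(nth_index y0 hy); apply: zip_nth_mem; rewrite ?e.
Qed.

Lemma zip_mem12 (xs : seq T1) (ys : seq T2) z :
  size xs = size ys -> z \in zip xs ys -> z.1 \in xs /\ z.2 \in ys.
Proof.
move=> e /(zip_memP e) [i hi ->] /=; split; apply: mem_nth; by rewrite -?e.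
Qed.

Lemma zip_inj (xs : seq T1) (ys : seq T2) z z' :
  size xs = size ys -> uniq xs -> uniq ys -> z \in zip xs ys -> z' \in zip xs ys ->
  z.1 = z'.1 \/ z.2 = z'.2 -> z = z'.
Proof.
move=> e ux uy /(zip_memP e) [i hi ->] /(zip_memP e) [j hj ->] /= [h|h].
  by move/eqP: h; rewrite nth_uniq // => /eqP ->.
by move/eqP: h; rewrite nth_uniq -?e // => /eqP ->.
Qed.
End Z.
Section CS.
Local Open Scope ring_scope.

Lemma canon_step_ok (P : {fset cell}) (B : cell * cell) X :
  rect_in P B.1 B.2 -> is_config P X -> hitscol P X -> hitsrow P X ->
  is_config P (canon_step B X) /\ hitscol P (canon_step B X) /\ hitsrow P (canon_step B X).
Proof.
case: B => b1 b2 /= R hX hc hr.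
rewrite /canon_step /=.
set S := [fset c in X | in_rect b1 b2 c].
set xs := sort _ _.
set ys := sort _ _.
have memS c : c \in S = (c \in X) && in_rect b1 b2 c by rewrite !inE.
have XP c : c \in X -> c \in P by move=> /(fsubsetP hX.1).
have injx : {in S &, injective (fun c : cell => c.1)}.
  move=> s s' /[!memS] /andP[sX sB] /andP[s'X s'B] e.
  apply/eqP/negP => /negP ne.
  have [k1 [k2 [hK sK]]] := col_exists (XP _ sX).
  have s'K := col_seg hK R sB s'B e sK.
  apply: (hX.2 s s' sX s'X); split; first exact/eqP.
  by exists k1, k2; split; [right|].
have injy : {in S &, injective (fun c : cell => c.2)}.
  move=> s s' /[!memS] /andP[sX sB] /andP[s'X s'B] e.
  apply/eqP/negP => /negP ne.
  have [k1 [k2 [hK sK]]] := row_exists (XP _ sX).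
  have s'K := row_seg hK R sB s'B e sK.
  apply: (hX.2 s s' sX s'X); split; first exact/eqP.
  by exists k1, k2; split; [left|].
have uxs : uniq xs by rewrite sort_uniq undup_uniq.
have uys : uniq ys by rewrite sort_uniq undup_uniq.
have sxs : size xs = #|` S|.
  rewrite size_sort undup_id ?size_map //.
  by rewrite map_inj_in_uniq ?fset_uniq.
have sys : size ys = #|` S|.
  rewrite size_sort undup_id ?size_map //.
  by rewrite map_inj_in_uniq ?fset_uniq.
have e : size xs = size ys by rewrite sxs sys.
have memxs x : x \in xs -> exists2 s, s \in S & s.1 = x.
  by rewrite mem_sort mem_undup => /mapP [s hs ->]; exists s.
have memys y : y \in ys -> exists2 s, s \in S & s.2 = y.
  by rewrite mem_sort mem_undup => /mapP [s hs ->]; exists s.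
have xsmem s : s \in S -> s.1 \in xs.
  by move=> hs; rewrite mem_sort mem_undup; apply/mapP; exists s.
have ysmem s : s \in S -> s.2 \in ys.
  by move=> hs; rewrite mem_sort mem_undup; apply/mapP; exists s.
have zS z : z \in zip xs ys -> [/\ in_rect b1 b2 z, exists2 s, s \in S & s.1 = z.1
                                   & exists2 s, s \in S & s.2 = z.2].
  move=> /(zip_mem12 0 0 e) [/memxs [s sS e1] /memys [s' s'S e2]].
  split; [ | by exists s | by exists s'].
  move: sS s'S; rewrite !memS => /andP[_ /inrP[u1 u2 u3 u4]] /andP[_ /inrP[v1 v2 v3 v4]].
  by apply/inrP; rewrite -e1 -e2; split.
have memY z : z \in (X `\` S) `|` seq_fset tt (zip xs ys) =
              ((z \in X) && (z \notin S)) || (z \in zip xs ys).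
  by rewrite in_fsetU in_fsetD seq_fsetE andbC.
have mixed z c : z \in zip xs ys -> c \in X -> c \notin S -> ~ attacks P z c.
  move=> /zS [zB [s sS e1] [s' s'S e2]] cX cS [ne [r1 [r2 [[hRw|hCl] [h1 h2]]]]].
    move: s'S; rewrite memS => /andP[s'X s'B].
    have := row_seg hRw R zB s'B (esym e2) h1 => h3.
    apply: (hX.2 s' c s'X cX); split.
      by move=> ec; move: cS; rewrite -ec memS s'X s'B.
    by exists r1, r2; split; [left|].
  move: sS; rewrite memS => /andP[sX sB].
  have := col_seg hCl R zB sB (esym e1) h1 => h3.
  apply: (hX.2 s c sX cX); split.
    by move=> ec; move: cS; rewrite -ec memS sX sB.
  by exists r1, r2; split; [right|].
split; [split|split].
- apply/fsubsetP => z; rewrite memY => /orP[/andP[zX _]|/zS [zB _ _]]; first exact: XP.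
  by case: R => _ _; apply.
- move=> c d; rewrite !memY => /orP[/andP[cX cS]|cZ] /orP[/andP[dX dS]|dZ].
  + exact: hX.2.
  + by move=> /attacks_sym; apply: mixed.
  + exact: mixed.
  + move=> hA; have [ne _] := hA.
    by apply: ne; apply: (zip_inj 0 0 e uxs uys cZ dZ); apply: attacks_xy hA.
- move=> a b hK; have [t [tX tK]] := hc a b hK.
  case tS: (t \in S); last by exists t; rewrite memY tX tS.
  have [y [hz hy]] := zip_memx 0 0 e (xsmem _ tS).
  have [zB _ _] := zS _ hz.
  move: tS; rewrite memS => /andP[_ tB].
  exists (t.1, y); split; first by rewrite memY hz orbT.
  exact: (col_seg hK R tB zB erefl tK).
- move=> a b hK; have [t [tX tK]] := hr a b hK.
  case tS: (t \in S); last by exists t; rewrite memY tX tS.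
  have [x [hz hx]] := zip_memy 0 0 e (ysmem _ tS).
  have [zB _ _] := zS _ hz.
  move: tS; rewrite memS => /andP[_ tB].
  exists (x, t.2); split; first by rewrite memY hz orbT.
  exact: (row_seg hK R tB zB erefl tK).
Qed.
End CS.
Lemma canon_ok (P : {fset cell}) Bs X :
  (forall B, B \in Bs -> rect_in P B.1 B.2) ->
  is_config P X -> hitscol P X -> hitsrow P X ->
  is_config P (canonical_config Bs X) /\ hitscol P (canonical_config Bs X) /\
  hitsrow P (canonical_config Bs X).
Proof.
elim: Bs X => [|B Bs IH] X hB hX hc hr /=; first by [].
rewrite /canonical_config /=.
have hB0 : rect_in P B.1 B.2 by apply: hB; rewrite inE eqxx.
have [h1 [h2 h3]] := canon_step_ok hB0 hX hc hr.
have hB' : forall B', B' \in Bs -> rect_in P B'.1 B'.2.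
  by move=> B' hB'; apply: hB; rewrite inE hB' orbT.
exact: (IH _ hB' h1 h2 h3).
Qed.

Theorem lemma4p1 (P : {fset cell}) (Bs : seq (cell * cell)) (d : nat)
    (C : {fset cell}) :
  P != fset0 ->
  uniq Bs ->
  (forall a b : cell, (a, b) \in Bs <-> is_maxrect P a b) ->
  is_rook_number P d ->
  rtilde P d = 1%N ->
  is_config P C -> #|` C| = d ->
  let T := canonical_config Bs C in
  (forall a b, is_col P a b -> exists t, t \in T /\ in_rect a b t) /\
  (forall a b, is_row P a b -> exists t, t \in T /\ in_rect a b t) /\
  (forall R, R \in P -> R \notin T ->
     exists t1 t2, t1 <> t2 /\ [/\ t1 \in T, t2 \in T,
                      attacks P R t1, attacks P R t2 &
                      forall t, t \in T -> attacks P R t -> t = t1 \/ t = t2]).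
Proof.
move=> _ _ hBs hrook hrt hC hd T.
have hB : forall B, B \in Bs -> rect_in P B.1 B.2.
  by case=> a b /hBs [h _].
have [hT [hcT hrT]] := canon_ok hB hC (config_hits_col hrook hrt hC hd)
                                      (config_hits_row hrook hrt hC hd).
split; first exact: hcT.
split; first exact: hrT.
move=> R RP RT.
have [r1 [r2 [hRw Rr]]] := row_exists RP.
have [t1 [t1T t1r]] := hrT _ _ hRw.
have [k1 [k2 [hK Rk]]] := col_exists RP.
have [t2 [t2T t2k]] := hcT _ _ hK.
have RT' t : t \in T -> R <> t by move=> tT e; move: RT; rewrite e tT.
exists t1, t2; split.
  move=> e; subst t2.
  have [_ e2 _] := hRw; have [_ e1 _] := hK.
  apply: (RT' t1 t1T).
  move: Rr t1r Rk t2k => /inrP[p1 p2 p3 p4] /inrP[q1 q2 q3 q4] /inrP[s1 s2 s3 s4] /inrP[w1 w2 w3 w4].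
  have E1 : @eq int R.1 t1.1.
    by change (@eq int (@fst int int R) (@fst int int t1)); lia.
  have E2 : @eq int R.2 t1.2.
    by change (@eq int (@snd int int R) (@snd int int t1)); lia.
  by rewrite [R]surjective_pairing [t1]surjective_pairing E1 E2.
split => //.
- by split; [exact: RT' | exists r1, r2; split; [left|]].
- by split; [exact: RT' | exists k1, k2; split; [right|]].
move=> t tT [ne [a [b [[hR'|hK'] [h1 h2]]]]].
  have tr := row_share hRw hR' Rr h1 h2.
  case: (t =P t1) => [->|net]; [by left | exfalso].
  apply: (hT.2 t t1 tT t1T); split => //.
  by exists r1, r2; split; [left|].
have tk := col_share hK hK' Rk h1 h2.
case: (t =P t2) => [->|net]; [by right | exfalso].
apply: (hT.2 t t2 tT t2T); split => //.
by exists k1, k2; split; [right|].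
Qed.
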